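(* There exists a constant $L>0$ such that for all symmetric matrices $Q,\delta Q\in\mathbb{R}^{3\times3}$, $|P(Q+\delta Q)-P(Q)|_F\le L\,|\delta Q|_F$.
   Context: Let $a,b\in\mathbb{R}$, $c>0$, and $A_0>0$ such that $\inf\{\frac a2\operatorname{tr}(Q^2)-\frac b3\operatorname{tr}(Q^3)+\frac c4(\operatorname{tr}(Q^2))^2+A_0:\ Q\in\mathbb{R}^{3\times3}\text{ symmetric}\}>0$. For symmetric $Q\in\mathbb{R}^{3\times3}$ define $r(Q)=\sqrt{2\big(\frac a2\operatorname{tr}(Q^2)-\frac b3\operatorname{tr}(Q^3)+\frac c4(\operatorname{tr}(Q^2))^2+A_0\big)}$, $S(Q)=aQ-b\big(Q^2-\frac13\operatorname{tr}(Q^2)I\big)+c\operatorname{tr}(Q^2)Q$, and $P(Q)=S(Q)/r(Q)$. $|A|_F=\sqrt{\sum_{i,j}A_{ij}^2}$ is the Frobenius norm. *)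

(* Defs.v *)
From HB Require Import structures.
From mathcomp Require Import all_boot all_order all_algebra.
From mathcomp Require Import reals.
Set Implicit Arguments. Unset Strict Implicit. Unset Printing Implicit Defensive.
Import Order.TTheory GRing.Theory Num.Theory.
Local Open Scope ring_scope.

Section LdG.
Variable R : realType.
Variables a b c A0 : R.

Definition ldg_energy (Q : 'M[R]_3) : R :=
  a / 2 * \tr (Q *m Q) - b / 3 * \tr (Q *m Q *m Q)
  + c / 4 * (\tr (Q *m Q)) ^+ 2 + A0.

Definition ldg_r (Q : 'M[R]_3) : R := Num.sqrt (2 * ldg_energy Q).

Definition ldg_S (Q : 'M[R]_3) : 'M[R]_3 :=
  a *: Q - b *: (Q *m Q - (\tr (Q *m Q) / 3) *: 1%:M) + (c * \tr (Q *m Q)) *: Q.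

Definition ldg_P (Q : 'M[R]_3) : 'M[R]_3 := (ldg_r Q)^-1 *: ldg_S Q.
End LdG.

Definition frob_norm (R : realType) (A : 'M[R]_3) : R :=
  Num.sqrt (\sum_(i < 3) \sum_(j < 3) A i j ^+ 2).

Definition symm3 (R : realType) (A : 'M[R]_3) : Prop := A^T = A.

(* Main.v *)
Require Import Defs.
From HB Require Import structures.
From mathcomp Require Import all_boot all_order all_algebra.
From mathcomp Require Import reals.
From mathcomp Require Import ring lra.
Import Order.TTheory GRing.Theory Num.Theory.
Local Open Scope ring_scope.
Lemma sq_le (R : realType) (p q : R) : 0 <= p -> p <= q -> p ^+ 2 <= q ^+ 2.
Proof. by move=> p0 pq; rewrite !expr2 ler_pM. Qed.

Lemma scal_low (R : realType) (a b c A0 m : R) : 0 < c -> 0 < A0 -> 0 < m ->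
  exists al : R, 0 < al /\ forall x t u : R, 0 <= x -> x ^+ 2 / 81 <= t -> t <= x ^+ 2 ->
   `|u| <= x ^+ 3 -> m <= a / 2 * t - b / 3 * u + c / 4 * t ^+ 2 + A0 ->
   al * (1 + x ^+ 2) ^+ 2 <= a / 2 * t - b / 3 * u + c / 4 * t ^+ 2 + A0.
Proof.
move=> c0 A00 m0.
set g := c / (4 * 81 * 81).
have g0 : 0 < g by rewrite /g; lra.
have g0' : 0 <= g := ltW g0.
set K := 1 + 4 * `|a| / g + 4 * `|b| / g.
have K1 : 1 <= K.
  rewrite /K; have h1 : 0 <= 4 * `|a| / g by rewrite divr_ge0 // mulr_ge0.
  have h2 : 0 <= 4 * `|b| / g by rewrite divr_ge0 // mulr_ge0.
  lra.
set D := (1 + K ^+ 2) ^+ 2.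
have D0 : 0 < D by rewrite /D exprn_gt0 // ltr_pwDl // sqr_ge0.
exists (Num.min (g / 8) (m / D)); split.
  by rewrite lt_min; apply/andP; split; [rewrite divr_gt0 | rewrite divr_gt0].
move=> x t u x0 tlo thi ub Em.
set E := a / 2 * t - b / 3 * u + c / 4 * t ^+ 2 + A0.
have t0 : 0 <= t by apply: le_trans tlo; rewrite divr_ge0 // sqr_ge0.
have w0 : 0 <= (1 + x ^+ 2) ^+ 2 by rewrite sqr_ge0.
have [xK | xK] := leP x K.
  apply: (@le_trans _ _ (m / D * (1 + x ^+ 2) ^+ 2)).
    by apply: ler_wpM2r => //; rewrite ge_min lexx orbT.
  have wD : (1 + x ^+ 2) ^+ 2 <= D.
    apply: sq_le; first by rewrite addr_ge0 // sqr_ge0.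
    by rewrite lerD2l; apply: sq_le.
  apply: (@le_trans _ _ (m / D * D)).
    by rewrite ler_wpM2l // divr_ge0 // ltW.
  by rewrite divfK // gt_eqF.
have x1 : 1 <= x := le_trans K1 (ltW xK).
have xb : 4 * `|b| <= g * x.
  rewrite [g * _]mulrC -ler_pdivrMr //; apply: (le_trans _ (ltW xK)).
  rewrite /K; have : 0 <= 4 * `|a| / g by rewrite divr_ge0 // mulr_ge0.
  lra.
have xa : 4 * `|a| <= g * x ^+ 2.
  rewrite [g * _]mulrC -ler_pdivrMr //; apply: (@le_trans _ _ x).
    apply: (le_trans _ (ltW xK)).
    rewrite /K; have : 0 <= 4 * `|b| / g by rewrite divr_ge0 // mulr_ge0.
    lra.
  by rewrite expr2 ler_peMl.
have ha : - `|a| * x ^+ 2 <= a * t.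
  have : `|a * t| <= `|a| * x ^+ 2.
    by rewrite normrM ler_wpM2l // ger0_norm.
  rewrite ler_norml => /andP [h _]; lra.
have hb : - `|b| * x ^+ 3 <= - b * u.
  have : `|b * u| <= `|b| * x ^+ 3.
    by rewrite normrM ler_wpM2l.
  rewrite ler_norml => /andP [_ h]; lra.
have ht : (x ^+ 2 / 81) ^+ 2 <= t ^+ 2.
  by apply: sq_le => //; rewrite divr_ge0 // sqr_ge0.
have hb2 : `|b| * x ^+ 3 <= g / 4 * x ^+ 4.
  have -> : g / 4 * x ^+ 4 = (g * x / 4) * x ^+ 3 by rewrite !exprS; field.
  apply: ler_wpM2r; [by rewrite exprn_ge0 | lra].
have ha2 : `|a| * x ^+ 2 <= g / 4 * x ^+ 4.
  have -> : g / 4 * x ^+ 4 = (g * x ^+ 2 / 4) * x ^+ 2 by rewrite !exprS; field.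
  apply: ler_wpM2r; [by rewrite exprn_ge0 | lra].
have hE : g / 2 * x ^+ 4 <= E.
  rewrite /E.
  have : c / 4 * t ^+ 2 >= c / 4 * (x ^+ 2 / 81) ^+ 2 by rewrite ler_wpM2l // divr_ge0 // ltW.
  have -> : c / 4 * (x ^+ 2 / 81) ^+ 2 = g * x ^+ 4 by rewrite /g; field.
  lra.
apply: (@le_trans _ _ (g / 8 * (1 + x ^+ 2) ^+ 2)).
  by apply: ler_wpM2r => //; rewrite ge_min lexx.
apply: le_trans hE.
have x21 : 1 <= x ^+ 2 by rewrite expr2; apply: (le_trans x1); rewrite ler_peMl.
have : (1 + x ^+ 2) ^+ 2 <= 4 * x ^+ 4.
  have -> : 4 * x ^+ 4 = (2 * x ^+ 2) ^+ 2 by ring.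
  apply: sq_le; [by rewrite addr_ge0 // sqr_ge0 | lra].
move=> h; have : g / 8 * (1 + x ^+ 2) ^+ 2 <= g / 8 * (4 * x ^+ 4) by rewrite ler_wpM2l // divr_ge0 // ltW.
lra.
Qed.

Section Nu.
Variable R : realType.
Implicit Types A B X Y : 'M[R]_3.

Definition nu A : R := \sum_(i < 3) \sum_(j < 3) `|A i j|.

Lemma nu_ge0 A : 0 <= nu A.
Proof. by apply: sumr_ge0 => i _; apply: sumr_ge0 => j _. Qed.

Lemma nuD A B : nu (A + B) <= nu A + nu B.
Proof.
rewrite /nu -big_split /=; apply: ler_sum => i _.
rewrite -big_split /=; apply: ler_sum => j _; rewrite mxE; exact: ler_normD.
Qed.

Lemma nuZ (k : R) A : nu (k *: A) = `|k| * nu A.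
Proof.
rewrite /nu mulr_sumr; apply: eq_bigr => i _.
rewrite mulr_sumr; apply: eq_bigr => j _; by rewrite mxE normrM.
Qed.

Lemma nuN A : nu (- A) = nu A.
Proof. by rewrite /nu; apply: eq_bigr => i _; apply: eq_bigr => j _; rewrite mxE normrN. Qed.

Lemma nuB A B : nu (A - B) <= nu A + nu B.
Proof. by rewrite -(nuN B); apply: nuD. Qed.

Lemma nuBC A B : nu (A - B) = nu (B - A).
Proof. by rewrite -opprB nuN. Qed.

Lemma rowsum_le_nu A k : \sum_(j < 3) `|A k j| <= nu A.
Proof.
rewrite /nu [X in _ <= X](bigD1 k) //= lerDl; apply: sumr_ge0 => i _; apply: sumr_ge0 => j _ //.
Qed.

Lemma entry_le_nu A i j : `|A i j| <= nu A.
Proof.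
apply: le_trans (rowsum_le_nu A i).
rewrite [X in _ <= X](bigD1 j) //= lerDl; apply: sumr_ge0 => l _ //.
Qed.

Lemma nuM A B : nu (A *m B) <= nu A * nu B.
Proof.
rewrite /nu mulr_suml; apply: ler_sum => i _.
apply: (@le_trans _ _ (\sum_(j < 3) \sum_(k < 3) `|A i k| * `|B k j|)).
  apply: ler_sum => j _; rewrite mxE.
  apply: le_trans (ler_norm_sum _ _ _) _; apply: ler_sum => k _; by rewrite normrM.
rewrite exchange_big /= mulr_suml; apply: ler_sum => k _.
rewrite -mulr_sumr; apply: ler_wpM2l => //.
exact: rowsum_le_nu.
Qed.

Lemma tr_le A : `|\tr A| <= nu A.
Proof.
rewrite /mxtrace; apply: le_trans (ler_norm_sum _ _ _) _.
apply: ler_sum => i _; rewrite [X in _ <= X](bigD1 i) //= lerDl; apply: sumr_ge0 => l _ //.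
Qed.

Lemma nu1 : nu (1%:M : 'M[R]_3) = 3.
Proof.
rewrite /nu !big_ord_recr !big_ord0 /= !mxE /=. rewrite !normr0 !normr1. lra.
Qed.

Lemma sqrsum_ge A i j : A i j ^+ 2 <= \sum_(i < 3) \sum_(j < 3) A i j ^+ 2.
Proof.
rewrite [X in _ <= X](bigD1 i) //= [X in _ <= X + _](bigD1 j) //= -addrA lerDl.
apply: addr_ge0; apply: sumr_ge0 => l _ //; [exact: sqr_ge0|].
apply: sumr_ge0 => m _; exact: sqr_ge0.
Qed.

Lemma frob_le_nu A : frob_norm A <= nu A.
Proof.
rewrite /frob_norm -(ger0_norm (nu_ge0 A)) -sqrtr_sqr ler_sqrt; last exact: sqr_ge0.
rewrite expr2 mulr_suml; apply: ler_sum => i _; rewrite mulr_suml; apply: ler_sum => j _.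
rewrite -real_normK ?num_real // expr2 ler_wpM2l //; exact: entry_le_nu.
Qed.

Lemma entry_le_frob A i j : `|A i j| <= frob_norm A.
Proof.
rewrite -sqrtr_sqr /frob_norm ler_sqrt; first exact: sqrsum_ge.
apply: sumr_ge0 => l _; apply: sumr_ge0 => m _; exact: sqr_ge0.
Qed.

Lemma nu_le_frob A : nu A <= 9 * frob_norm A.
Proof.
apply: (@le_trans _ _ (\sum_(i < 3) \sum_(j < 3) frob_norm A)).
  apply: ler_sum => i _; apply: ler_sum => j _; exact: entry_le_frob.
rewrite !big_ord_recr !big_ord0 /=. lra.
Qed.

Lemma tr_sym_frob A : symm3 A -> \tr (A *m A) = frob_norm A ^+ 2.
Proof.
move=> sA; rewrite /frob_norm sqr_sqrtr; last first.
  apply: sumr_ge0 => l _; apply: sumr_ge0 => m _; exact: sqr_ge0.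
rewrite /mxtrace; apply: eq_bigr => i _; rewrite mxE; apply: eq_bigr => k _.
have -> : A k i = A i k by rewrite -{1}sA mxE.
by rewrite expr2.
Qed.


Lemma nu_sum5 A B C D F : nu (A - B + C + D + F) <= nu A + nu B + nu C + nu D + nu F.
Proof.
have := nuD (A - B + C + D) F; have := nuD (A - B + C) D; have := nuD (A - B) C;
have := nuB A B; lra.
Qed.



Lemma nuM3 A B C : nu (A *m B *m C) <= nu A * nu B * nu C.
Proof.
apply: le_trans (nuM _ _) _; apply: ler_wpM2r; first exact: nu_ge0.
exact: nuM.
Qed.

Lemma nu_sq X : nu (X *m X) <= nu X ^+ 2.
Proof. by rewrite expr2; apply: nuM. Qed.

Lemma tr_sq X : `|\tr (X *m X)| <= nu X ^+ 2.
Proof. exact: le_trans (tr_le _) (nu_sq X). Qed.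

Lemma nu_dsq X Y : nu (Y *m Y - X *m X) <= (nu Y + nu X) * nu (Y - X).
Proof.
have -> : Y *m Y - X *m X = Y *m (Y - X) + (Y - X) *m X.
  by rewrite mulmxBr mulmxBl addrA subrK.
apply: le_trans (nuD _ _) _.
have := nuM Y (Y - X); have := nuM (Y - X) X.
have := nu_ge0 X; have := nu_ge0 Y; have := nu_ge0 (Y - X).
nra.
Qed.

Lemma tr_dsq X Y : `|\tr (Y *m Y) - \tr (X *m X)| <= (nu Y + nu X) * nu (Y - X).
Proof. rewrite -linearB; exact: le_trans (tr_le _) (nu_dsq X Y). Qed.

Lemma nu_dcube X Y : nu (Y *m Y *m Y - X *m X *m X) <=
   (nu Y ^+ 2 + nu Y * nu X + nu X ^+ 2) * nu (Y - X).
Proof.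
have -> : Y *m Y *m Y - X *m X *m X =
   Y *m Y *m (Y - X) + Y *m (Y - X) *m X + (Y - X) *m X *m X.
  rewrite !mulmxBr !mulmxBl.
  by rewrite !addrA !subrK.
have := nuD (Y *m Y *m (Y - X) + Y *m (Y - X) *m X) ((Y - X) *m X *m X).
have := nuD (Y *m Y *m (Y - X)) (Y *m (Y - X) *m X).
have := nuM3 Y Y (Y - X); have := nuM3 Y (Y - X) X; have := nuM3 (Y - X) X X.
rewrite !expr2.
have := nu_ge0 X; have := nu_ge0 Y; have := nu_ge0 (Y - X).
nra.
Qed.


Variables a b c A0 : R.
Hypothesis c0 : 0 < c.

Lemma S_diff X Y : ldg_S a b c Y - ldg_S a b c X =
  a *: (Y - X) - b *: (Y *m Y - X *m X) + ((b / 3) * (\tr (Y *m Y) - \tr (X *m X))) *: 1%:M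
  + (c * \tr (Y *m Y)) *: (Y - X) + (c * (\tr (Y *m Y) - \tr (X *m X))) *: X.
Proof.
apply/matrixP => i j; rewrite /ldg_S !mxE; ring.
Qed.

Lemma nu_S_diff X Y : nu X <= nu Y ->
  nu (ldg_S a b c Y - ldg_S a b c X) <= (`|a| + 4 * `|b| * nu Y + 3 * c * nu Y ^+ 2) * nu (Y - X).
Proof.
move=> xy; rewrite S_diff; apply: le_trans (nu_sum5 _ _ _ _ _) _.
rewrite !nuZ nu1 !normrM (gtr0_norm c0) normfV normr_nat.
have h1 := nu_dsq X Y; have h2 := tr_dsq X Y; have h3 := tr_sq Y.
set x := nu X in xy h1 h2 h3 *; set y := nu Y in xy h1 h2 h3 *; set d := nu (Y - X) in h1 h2 *.
set t1 := `|\tr (Y *m Y) - \tr (X *m X)| in h2 *.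
set t2 := `|\tr (Y *m Y)| in h3 *.
set m := nu (Y *m Y - X *m X) in h1 *.
have x0 : 0 <= x := nu_ge0 X. have d0 : 0 <= d := nu_ge0 _.
have a0 : 0 <= `|a| := normr_ge0 a. have b0 : 0 <= `|b| := normr_ge0 b.
have e1 : `|b| * m <= `|b| * ((y + x) * d) by rewrite ler_wpM2l.
have e2 : `|b| / 3 * t1 * 3 <= `|b| * ((y + x) * d).
  have -> : `|b| / 3 * t1 * 3 = `|b| * t1 by field.
  by rewrite ler_wpM2l.
have e3 : c * t2 * d <= c * y ^+ 2 * d.
  by rewrite ler_wpM2r // ler_wpM2l // ltW.
have e4 : c * t1 * x <= c * ((y + x) * d) * x.
  by rewrite ler_wpM2r // ler_wpM2l // ltW.
have e5 : `|b| * ((y + x) * d) <= `|b| * (2 * y * d).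
  apply: (ler_wpM2l b0); apply: (ler_wpM2r d0); lra.
have e6 : c * ((y + x) * d) * x <= c * (2 * y * d) * y.
  have cy : 0 <= y by apply: le_trans xy.
  apply: ler_pM => //; first by rewrite mulr_ge0 ?mulr_ge0 ?addr_ge0 // ltW.
  apply: (ler_wpM2l (ltW c0)); apply: (ler_wpM2r d0); lra.
nra.
Qed.

Lemma nu_S X : nu (ldg_S a b c X) <= `|a| * nu X + 2 * `|b| * nu X ^+ 2 + c * nu X ^+ 3.
Proof.
rewrite /ldg_S.
have := nuD (a *: X - b *: (X *m X - (\tr (X *m X) / 3) *: 1%:M)) ((c * \tr (X *m X)) *: X).
have := nuB (a *: X) (b *: (X *m X - (\tr (X *m X) / 3) *: 1%:M)).
have := nuB (X *m X) ((\tr (X *m X) / 3) *: 1%:M).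
rewrite !nuZ nu1 !normrM (gtr0_norm c0) normfV normr_nat.
have h3 := tr_sq X; have h1 := nu_sq X.
set x := nu X in h1 h3 *.
set t := `|\tr (X *m X)| in h3 *.
have x0 : 0 <= x := nu_ge0 X.
have a0 : 0 <= `|a| := normr_ge0 a. have b0 : 0 <= `|b| := normr_ge0 b.
have -> : t / 3 * 3 = t by field.
move=> q1 q2 q3.
have e1 : `|b| * nu (X *m X - (\tr (X *m X) / 3) *: 1%:M) <= `|b| * (2 * x ^+ 2).
  rewrite ler_wpM2l //; lra.
have e2 : c * t * x <= c * x ^+ 2 * x by rewrite ler_wpM2r // ler_wpM2l // ltW.
have -> : x ^+ 3 = x ^+ 2 * x by rewrite exprSr.
nra.
Qed.

Lemma E_diff X Y : ldg_energy a b c A0 Y - ldg_energy a b c A0 X =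
  a / 2 * (\tr (Y *m Y) - \tr (X *m X)) - b / 3 * \tr (Y *m Y *m Y - X *m X *m X)
  + c / 4 * ((\tr (Y *m Y) - \tr (X *m X)) * (\tr (Y *m Y) + \tr (X *m X))).
Proof. rewrite linearB /ldg_energy /=; ring. Qed.

Lemma E_diff_le X Y : nu X <= nu Y ->
  `|ldg_energy a b c A0 Y - ldg_energy a b c A0 X| <=
    (`|a| * nu Y + `|b| * nu Y ^+ 2 + c * nu Y ^+ 3) * nu (Y - X).
Proof.
move=> xy; rewrite E_diff.
have h1 := tr_dsq X Y; have h2 := le_trans (tr_le _) (nu_dcube X Y).
have h3 := tr_sq Y; have h4 := tr_sq X.
set x := nu X in xy h1 h2 h3 h4 *; set y := nu Y in xy h1 h2 h3 h4 *; set d := nu (Y - X) in h1 h2 *.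
set T := \tr (Y *m Y) - \tr (X *m X) in h1 *.
set U := \tr (Y *m Y *m Y - X *m X *m X) in h2 *.
set tY := \tr (Y *m Y) in h3 *; set tX := \tr (X *m X) in h4 *.
have x0 : 0 <= x := nu_ge0 X. have d0 : 0 <= d := nu_ge0 _.
have y0 : 0 <= y by apply: le_trans xy.
have a0 : 0 <= `|a| := normr_ge0 a. have b0 : 0 <= `|b| := normr_ge0 b.
have n1 : `|a / 2 * T - b / 3 * U + c / 4 * (T * (tY + tX))| <=
    `|a| / 2 * `|T| + `|b| / 3 * `|U| + c / 4 * (`|T| * `|tY + tX|).
  apply: le_trans (ler_normD _ _) _.
  have := ler_normB (a / 2 * T) (b / 3 * U).
  rewrite !normrM !normfV !normr_nat (gtr0_norm c0).
  lra.
apply: le_trans n1 _.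
have hT : `|T| <= 2 * y * d by apply: le_trans h1 _; apply: (ler_wpM2r d0); lra.
have hU : `|U| <= 3 * y ^+ 2 * d.
  apply: le_trans h2 _; apply: (ler_wpM2r d0).
  have : y * x <= y * y by apply: ler_wpM2l.
  have : x ^+ 2 <= y ^+ 2 by apply: sq_le.
  rewrite !expr2; lra.
have hs : `|tY + tX| <= 2 * y ^+ 2.
  apply: le_trans (ler_normD _ _) _.
  have : x ^+ 2 <= y ^+ 2 by apply: sq_le.
  lra.
have T0 : 0 <= `|T| := normr_ge0 _.
have e1 : `|a| / 2 * `|T| <= `|a| / 2 * (2 * y * d) by apply: ler_wpM2l => //; rewrite divr_ge0.
have e2 : `|b| / 3 * `|U| <= `|b| / 3 * (3 * y ^+ 2 * d) by apply: ler_wpM2l => //; rewrite divr_ge0.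
have e3 : `|T| * `|tY + tX| <= (2 * y * d) * (2 * y ^+ 2) by apply: ler_pM.
have e4 : c / 4 * (`|T| * `|tY + tX|) <= c / 4 * ((2 * y * d) * (2 * y ^+ 2)).
  by apply: ler_wpM2l => //; rewrite divr_ge0 // ltW.
have -> : (`|a| * y + `|b| * y ^+ 2 + c * y ^+ 3) * d =
   `|a| / 2 * (2 * y * d) + `|b| / 3 * (3 * y ^+ 2 * d) + c / 4 * ((2 * y * d) * (2 * y ^+ 2)).
  by field.
lra.
Qed.

End Nu.
Lemma fin_scal (R : realType) (A B C be x y d rX rY EX EY sd sX : R) :
 0 <= A -> 0 <= B -> 0 <= C -> 0 < be -> 0 <= x -> x <= y -> 0 <= d ->
 be * (1 + x ^+ 2) <= rX -> be * (1 + y ^+ 2) <= rY ->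
 rX ^+ 2 = 2 * EX -> rY ^+ 2 = 2 * EY ->
 sd <= (A + 4 * B * y + 3 * C * y ^+ 2) * d -> 0 <= sX ->
 sX <= A * x + 2 * B * x ^+ 2 + C * x ^+ 3 ->
 `|EY - EX| <= (A * y + B * y ^+ 2 + C * y ^+ 3) * d ->
 rY^-1 * sd + `|rY^-1 - rX^-1| * sX <=
   ((A + 4 * B + 3 * C) / be + 4 * (A + 2 * B + C) * (A + B + C) / be ^+ 3) * d.
Proof.
move=> A0 B0 C0 b0 x0 xy d0 hX hY eX eY hsd sX0 hsX hE.
set u := 1 + y ^+ 2. set v := 1 + x ^+ 2.
have y0 : 0 <= y := le_trans x0 xy.
have u1 : 1 <= u by rewrite /u lerDl sqr_ge0.
have v1 : 1 <= v by rewrite /v lerDl sqr_ge0.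
have rX0 : 0 < rX by apply: lt_le_trans hX; rewrite mulr_gt0 //; exact: (lt_le_trans ltr01 v1).
have rY0 : 0 < rY by apply: lt_le_trans hY; rewrite mulr_gt0 //; exact: (lt_le_trans ltr01 u1).
set p := rX^-1. set q := rY^-1. set ib := be^-1.
have p0 : 0 < p by rewrite invr_gt0. have q0 : 0 < q by rewrite invr_gt0.
have ib0 : 0 < ib by rewrite invr_gt0.
have p0' := ltW p0. have q0' := ltW q0. have ib0' := ltW ib0.
have pr : p * rX = 1 by rewrite mulVf // gt_eqF.
have qr : q * rY = 1 by rewrite mulVf // gt_eqF.
have bi : be * ib = 1 by rewrite mulfV // gt_eqF.
have qu : q * u <= ib.
  have h : q * (be * u) <= q * rY by rewrite ler_wpM2l // ltW.
  have -> : q * u = (q * (be * u)) * ib by rewrite -mulrA (mulrC be) -mulrA bi mulr1.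
  rewrite qr in h; have := ler_wpM2r (ltW ib0) h; lra.
have pv : p * v <= ib.
  have h : p * (be * v) <= p * rX by rewrite ler_wpM2l // ltW.
  have -> : p * v = (p * (be * v)) * ib by rewrite -mulrA (mulrC be) -mulrA bi mulr1.
  rewrite pr in h; have := ler_wpM2r (ltW ib0) h; lra.
have yu : y <= u by rewrite /u; nra.
have y2u : y ^+ 2 <= u by rewrite /u; lra.
have s1 : sd <= (A + 4 * B + 3 * C) * u * d.
  apply: le_trans hsd _; apply: ler_wpM2r => //.
  nra.
have h1 : q * sd <= (A + 4 * B + 3 * C) * ib * d.
  have : q * sd <= q * ((A + 4 * B + 3 * C) * u * d) by rewrite ler_wpM2l // ltW.
  have : (A + 4 * B + 3 * C) * d * (q * u) <= (A + 4 * B + 3 * C) * d * ib.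
    by apply: ler_wpM2l => //; rewrite mulr_ge0 //; lra.
  move=> h h'; apply: le_trans h' _. 
  have -> : q * ((A + 4 * B + 3 * C) * u * d) = (A + 4 * B + 3 * C) * d * (q * u) by ring.
  have -> : (A + 4 * B + 3 * C) * ib * d = (A + 4 * B + 3 * C) * d * ib by ring.
  exact: h.
set de := `|rX - rY|.
have de0 : 0 <= de := normr_ge0 _.
have qp : `|q - p| = de * p * q.
  have -> : q - p = (rX - rY) * p * q.
    have -> : (rX - rY) * p * q = (p * rX) * q - (q * rY) * p by ring.
    by rewrite pr qr mul1r mul1r.
  by rewrite !normrM (gtr0_norm p0) (gtr0_norm q0).
set e := `|EY - EX|.
have e0 : 0 <= e := normr_ge0 _.
have dr : de * rY <= 2 * e.
  have : de * (rX + rY) = 2 * e.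
    have hp : 0 < rX + rY by rewrite addr_gt0.
    rewrite /de /e -[rX + rY](gtr0_norm hp) -normrM.
    have -> : (rX - rY) * (rX + rY) = - (2 * (EY - EX)) by transitivity (rX ^+ 2 - rY ^+ 2); [ring | rewrite eX eY; ring].
    by rewrite normrN normrM ger0_norm.
  have : 0 <= de * rX by rewrite mulr_ge0 // ltW.
  nra.
have psX : p * sX <= (A + 2 * B + C) * (1 + y) * ib.
  have hs : sX <= (A + 2 * B + C) * (1 + x) * v.
    apply: le_trans hsX _; rewrite /v.
    have : 0 <= x ^+ 2 := sqr_ge0 x. have : 0 <= x ^+ 3 by rewrite exprn_ge0.
    rewrite !exprS !expr0 !mulr1. nra.
  have : p * sX <= (A + 2 * B + C) * (1 + x) * (p * v).
    have -> : (A + 2 * B + C) * (1 + x) * (p * v) = p * ((A + 2 * B + C) * (1 + x) * v) by ring.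
    by rewrite ler_wpM2l // ltW.
  have : (A + 2 * B + C) * (1 + x) * (p * v) <= (A + 2 * B + C) * (1 + y) * ib.
    apply: ler_pM; rewrite ?mulr_ge0 //; try lra.
    by apply: ler_wpM2l; lra.
  lra.
have eb : e <= (A + B + C) * (1 + y) * u * d.
  apply: le_trans hE _; apply: ler_wpM2r => //; rewrite /u.
  have : 0 <= y ^+ 2 := sqr_ge0 y. have : 0 <= y ^+ 3 by rewrite exprn_ge0.
  rewrite !exprS !expr0 !mulr1. nra.
have t2 : `|q - p| * sX <= 2 * e * (q * q) * (p * sX).
  rewrite qp.
  have -> : de * p * q * sX = (de * rY) * (q * q) * (p * sX).
    have -> : de * rY * (q * q) * (p * sX) = de * (q * rY) * q * p * sX by ring.
    by rewrite qr mulr1; ring.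
  apply: ler_wpM2r; first by rewrite mulr_ge0 // ltW.
  apply: ler_wpM2r; first by rewrite mulr_ge0 // ltW.
  exact: dr.
have t3 : 2 * e * (q * q) * (p * sX) <=
   2 * ((A + B + C) * (1 + y) * u * d) * (q * q) * ((A + 2 * B + C) * (1 + y) * ib).
  apply: ler_pM.
  - by rewrite !mulr_ge0.
  - by rewrite mulr_ge0.
  - apply: ler_wpM2r; first by rewrite mulr_ge0.
    by apply: ler_wpM2l.
  - exact: psX.
have qu2 : (q * u) ^+ 2 <= ib ^+ 2 by apply: sq_le => //; rewrite mulr_ge0 //; exact: le_trans ler01 u1.
have yy : (1 + y) ^+ 2 <= 2 * u by rewrite /u; have := sqr_ge0 (1 - y); rewrite !expr2; nra.
have t4 : 2 * ((A + B + C) * (1 + y) * u * d) * (q * q) * ((A + 2 * B + C) * (1 + y) * ib)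
   = 2 * (A + B + C) * (A + 2 * B + C) * ib * d * ((1 + y) ^+ 2 * (q * q * u)) by ring.
have t5 : (1 + y) ^+ 2 * (q * q * u) <= 2 * ib ^+ 2.
  have -> : (1 + y) ^+ 2 * (q * q * u) = ((1 + y) ^+ 2 / u) * (q * u) ^+ 2.
    by rewrite expr2; field; apply/eqP; lra.
  apply: ler_pM.
  - by rewrite divr_ge0 ?sqr_ge0 //; lra.
  - exact: sqr_ge0.
  - rewrite ler_pdivrMr; [exact: yy | exact: (lt_le_trans ltr01 u1)].
  - exact: qu2.
have K0 : 0 <= 2 * (A + B + C) * (A + 2 * B + C) * ib * d by rewrite !mulr_ge0 //; lra.
have t6 := ler_wpM2l K0 t5.
have -> : ((A + 4 * B + 3 * C) / be + 4 * (A + 2 * B + C) * (A + B + C) / be ^+ 3) * d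
   = (A + 4 * B + 3 * C) * ib * d + 2 * (A + B + C) * (A + 2 * B + C) * ib * d * (2 * ib ^+ 2).
  by rewrite /ib; field; apply/eqP; lra.
lra.
Qed.

Theorem theorem4p11 (R : realType) (a b c A0 : R) :
  0 < c -> 0 < A0 ->
  (exists m : R, 0 < m /\
     forall Q : 'M[R]_3, symm3 Q -> m <= ldg_energy a b c A0 Q) ->
  exists L : R, 0 < L /\
    forall Q dQ : 'M[R]_3, symm3 Q -> symm3 dQ ->
      frob_norm (ldg_P a b c A0 (Q + dQ) - ldg_P a b c A0 Q)
        <= L * frob_norm dQ.
Proof.
move=> c0 A00 [m [m0 hm]].
have [al [al0 hal]] := @scal_low R a b c A0 m c0 A00 m0.
set be := Num.min 1 (2 * al).
have be0 : 0 < be by rewrite lt_min ltr01 /=; lra.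
have be1 : be <= 1 by rewrite ge_min lexx.
have be2 : be <= 2 * al by rewrite ge_min lexx orbT.
have E0 : forall Q : 'M[R]_3, symm3 Q -> 0 <= 2 * ldg_energy a b c A0 Q.
  by move=> Q sQ; have := hm Q sQ; lra.
have rsq : forall Q : 'M[R]_3, symm3 Q -> ldg_r a b c A0 Q ^+ 2 = 2 * ldg_energy a b c A0 Q.
  by move=> Q sQ; rewrite /ldg_r sqr_sqrtr // E0.
have rlow : forall Q : 'M[R]_3, symm3 Q -> be * (1 + nu R Q ^+ 2) <= ldg_r a b c A0 Q.
  move=> Q sQ.
  have x0 := nu_ge0 R Q.
  have hE := hal (nu R Q) (\tr (Q *m Q)) (\tr (Q *m Q *m Q)) x0.
  have t1 : nu R Q ^+ 2 / 81 <= \tr (Q *m Q).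
    rewrite tr_sym_frob //.
    have -> : nu R Q ^+ 2 / 81 = (nu R Q / 9) ^+ 2 by field.
    apply: sq_le; first by rewrite divr_ge0.
    have := nu_le_frob R Q; lra.
  have t2 : \tr (Q *m Q) <= nu R Q ^+ 2 := le_trans (ler_norm _) (tr_sq R Q).
  have t3 : `|\tr (Q *m Q *m Q)| <= nu R Q ^+ 3.
    apply: le_trans (tr_le R _) _; apply: le_trans (nuM3 R _ _ _) _.
    by rewrite !exprS expr0 mulr1 mulrA.
  have := hE t1 t2 t3 (hm Q sQ) => {}hE.
  have w0 : 0 <= be * (1 + nu R Q ^+ 2) by apply: mulr_ge0; [exact: ltW | rewrite addr_ge0 // sqr_ge0].
  rewrite /ldg_r -(ger0_norm w0) -sqrtr_sqr ler_sqrt; last exact: E0.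
  rewrite /ldg_energy.
  have wq : 0 <= (1 + nu R Q ^+ 2) ^+ 2 by rewrite sqr_ge0.
  have : be ^+ 2 <= 2 * al by rewrite expr2; nra.
  move=> hb; rewrite exprMn.
  have := ler_wpM2r wq hb. lra.
set K0 := `|a| + 4 * `|b| + 3 * c.
set L' := (K0 / be + 4 * (`|a| + 2 * `|b| + c) * (`|a| + `|b| + c) / be ^+ 3).
have na := normr_ge0 a. have nb := normr_ge0 b.
have k0 : 0 < K0 by rewrite /K0; lra.
have k1 : 0 <= 4 * (`|a| + 2 * `|b| + c) * (`|a| + `|b| + c) / be ^+ 3.
  apply: divr_ge0; last by rewrite exprn_ge0 // ltW.
  apply: mulr_ge0; [apply: mulr_ge0|]; lra.
have L'0 : 0 < L' by rewrite /L'; have := divr_gt0 k0 be0; lra.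
have core : forall X Y : 'M[R]_3, symm3 X -> symm3 Y -> nu R X <= nu R Y ->
    nu R (ldg_P a b c A0 Y - ldg_P a b c A0 X) <= L' * nu R (Y - X).
  move=> X Y sX sY xy.
  have rY0 : 0 < ldg_r a b c A0 Y.
    by apply: lt_le_trans (rlow Y sY); rewrite mulr_gt0 // ltr_pwDl // sqr_ge0.
  rewrite /ldg_P.
  set rX := ldg_r a b c A0 X. set rY := ldg_r a b c A0 Y.
  set SX := ldg_S a b c X. set SY := ldg_S a b c Y.
  have -> : rY^-1 *: SY - rX^-1 *: SX = rY^-1 *: (SY - SX) + (rY^-1 - rX^-1) *: SX.
    by rewrite scalerBr scalerBl addrA subrK.
  apply: le_trans (nuD _ _ _) _; rewrite !nuZ (gtr0_norm (_ : 0 < rY^-1)); last by rewrite invr_gt0.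
  rewrite /L' /K0.
  apply: (@fin_scal R `|a| `|b| c be (nu R X) (nu R Y) (nu R (Y - X)) rX rY
     (ldg_energy a b c A0 X) (ldg_energy a b c A0 Y)).
  - exact: normr_ge0.
  - exact: normr_ge0.
  - exact: ltW.
  - exact: be0.
  - exact: nu_ge0.
  - exact: xy.
  - exact: nu_ge0.
  - exact: rlow.
  - exact: rlow.
  - exact: rsq.
  - exact: rsq.
  - exact: nu_S_diff.
  - exact: nu_ge0.
  - exact: nu_S.
  - exact: E_diff_le.
exists (9 * L'); split; first by rewrite mulr_gt0.
move=> Q dQ sQ sdQ.
have sQd : symm3 (Q + dQ) by rewrite /symm3 linearD /= sQ sdQ.
apply: le_trans (frob_le_nu R _) _.
have hd : nu R dQ <= 9 * frob_norm dQ := nu_le_frob R dQ.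
have : nu R (ldg_P a b c A0 (Q + dQ) - ldg_P a b c A0 Q) <= L' * nu R dQ.
  have [h|h] := leP (nu R Q) (nu R (Q + dQ)).
    by have := core Q (Q + dQ) sQ sQd h; rewrite addrAC subrr add0r.
  rewrite nuBC.
  have := core (Q + dQ) Q sQd sQ (ltW h).
  by rewrite opprD addrA subrr add0r nuN.
move=> h.
have := ler_wpM2l (ltW L'0) hd.
lra.
Qed.
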